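(* Let $F$ be a field of characteristic $0$, let $G$ be a group such that its abelianization $\widetilde G=G/[G,G]$ is finitely generated, and let $A$ be an $F$-vector space endowed with a linear right $G$-action $a\mapsto a^g$. If $\dim_F A^G<\infty$, then $\dim_F \mathcal P_n(G,A)<\infty$ for every $n\in\mathbb Z_+$.
   Context: A right $G$-action on $A$ means maps $a\mapsto a^g$ with $a^{\mathbf e}=a$ and $(a^g)^h=a^{gh}$, where $\mathbf e$ is the identity of $G$; ''linear'' means each $a\mapsto a^g$ is $F$-linear. $A^G=\{a\in A: a^g=a \ \forall g\in G\}$. For $n\ge 0$, $\mathcal C^n(G,A)$ is the space of normalized $n$-cochains: $\mathcal C^0(G,A)=A$, and for $n\ge1$ it consists of all functions $c:G^n\to A$ with $c(g_1,\dots,g_n)=0$ whenever some $g_i=\mathbf e$. For $n\ge1$ define $d_n:\mathcal C^{n-1}(G,A)\to\mathcal C^n(G,A)$ by $(d_nc)(g_1,\dots,g_n)=[c(g_1,\dots,g_{n-1})]^{g_n}-c(g_1,\dots,g_{n-1})$ (for $n=1$: $(d_1a)(g_1)=a^{g_1}-a$). The iterated difference operators are $D^0=\mathrm{id}_A$ and $D^n=d_nD^{n-1}$ for $n\ge1$. The space of $G$-polynomials (polynomial-like elements) of order at most $n$ is $\mathcal P_n(G,A)=\ker\big(D^{n+1}:A\to\mathcal C^{n+1}(G,A)\big)$. *)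

(* Defs.v *)
From Stdlib Require List.
From mathcomp Require Import all_boot all_algebra.
Set Implicit Arguments. Unset Strict Implicit. Unset Printing Implicit Defensive.
Import GRing.Theory.
Local Open Scope ring_scope.

Record group := Group {
  gcar :> Type;
  gmul : gcar -> gcar -> gcar;
  gone : gcar;
  ginv : gcar -> gcar;
  gmulA : forall x y z, gmul x (gmul y z) = gmul (gmul x y) z;
  gmul1g : forall x, gmul gone x = x;
  gmulg1 : forall x, gmul x gone = x;
  gmulVg : forall x, gmul (ginv x) x = gone;
  gmulgV : forall x, gmul x (ginv x) = gone }.

Inductive gen (G : group) (S : G -> Prop) : G -> Prop :=
| gen_in x : S x -> gen S x
| gen_one : gen S (gone G)
| gen_mul x y : gen S x -> gen S y -> gen S (gmul x y)
| gen_inv x : gen S x -> gen S (ginv x).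

Definition commg (G : group) (x y : G) : G :=
  gmul (gmul (ginv x) (ginv y)) (gmul x y).

Definition commutator_subgroup (G : group) : G -> Prop :=
  gen (fun z => exists x y, z = commg x y).

(* G/[G,G] is finitely generated: there is a finite list s whose images
   generate G/[G,G], i.e. G is generated by s together with [G,G]. *)
Definition abelianization_fg (G : group) : Prop :=
  exists s : seq G,
    forall g : G, gen (fun x => List.In x s \/ commutator_subgroup x) g.

Definition is_linear_right_action (F : fieldType) (A : lmodType F) (G : group)
  (act : A -> G -> A) : Prop :=
  (forall a, act a (gone G) = a) /\
  (forall a g h, act (act a g) h = act a (gmul g h)) /\
  (forall g (k : F) a b, act (k *: a + b) g = k *: act a g + act b g).

Definition fixed_space (F : fieldType) (A : lmodType F) (G : group)
  (act : A -> G -> A) : A -> Prop := fun a => forall g, act a g = a.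

(* iterated difference operator D^n : A -> C^n(G,A); an n-cochain is
   represented as a function on sequences, evaluated at [:: g_1; ...; g_n]:
   (D^{m+1} a)(g_1..g_{m+1}) = (D^m a (g_1..g_m))^{g_{m+1}} - D^m a (g_1..g_m) *)
Fixpoint Diter (F : fieldType) (A : lmodType F) (G : group)
  (act : A -> G -> A) (n : nat) (a : A) : seq G -> A :=
  match n with
  | 0 => fun _ => a
  | m.+1 => fun gs =>
      act (Diter act m a (take m gs)) (nth (gone G) gs m)
      - Diter act m a (take m gs)
  end.

Definition Ppoly (F : fieldType) (A : lmodType F) (G : group)
  (act : A -> G -> A) (n : nat) : A -> Prop :=
  fun a => forall gs : seq G, size gs = n.+1 -> Diter act n.+1 a gs = 0.

Definition in_span (F : fieldType) (A : lmodType F) (s : seq A) (a : A) : Prop :=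
  exists c : 'I_(size s) -> F, a = \sum_(i < size s) c i *: s`_i.

Definition finite_dim (F : fieldType) (A : lmodType F) (S : A -> Prop) : Prop :=
  exists s : seq A, (forall x, List.In x s -> S x) /\
    (forall a, S a <-> in_span s a).

(* Main.v *)
Require Import Defs.
From mathcomp Require Import all_boot all_algebra.
From Stdlib Require Import Classical.
From Stdlib Require List.
Set Implicit Arguments. Unset Strict Implicit. Unset Printing Implicit Defensive.
Import GRing.Theory.
Local Open Scope ring_scope.

Section LinAlg.
Variables (F : fieldType) (A : lmodType F).

Fixpoint spanL (s : seq A) (a : A) : Prop :=
  match s with
  | [::] => a = 0
  | x :: s' => exists c r, spanL s' r /\ a = c *: x + r
  end.

Definition subsp (S : A -> Prop) := S 0 /\ forall k a b, S a -> S b -> S (k *: a + b).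
Definition fd (S : A -> Prop) :=
  exists s, (forall x, List.In x s -> S x) /\ forall a, S a -> spanL s a.
Definition lin (f : A -> A) := forall k a b, f (k *: a + b) = k *: f a + f b.

Lemma subspD S a b : subsp S -> S a -> S b -> S (a + b).
Proof. by move=> [_ h] ha hb; have := h 1 a b ha hb; rewrite scale1r. Qed.
Lemma subspZ S k a : subsp S -> S a -> S (k *: a).
Proof. by move=> [h0 h] ha; have := h k a 0 ha h0; rewrite addr0. Qed.
Lemma subspN S a : subsp S -> S a -> S (- a).
Proof. by move=> hS ha; rewrite -scaleN1r; apply: subspZ. Qed.
Lemma subspB S a b : subsp S -> S a -> S b -> S (a - b).
Proof. by move=> hS ha hb; apply: subspD => //; apply: subspN. Qed.

Lemma lin0 f : lin f -> f 0 = 0.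
Proof.
move=> hf; have := hf 1 0 0; rewrite scaler0 addr0 scale1r => h.
by apply: (addrI (f 0)); rewrite addr0 -h.
Qed.
Lemma linD f a b : lin f -> f (a + b) = f a + f b.
Proof. by move=> hf; have := hf 1 a b; rewrite !scale1r. Qed.
Lemma linN f a : lin f -> f (- a) = - f a.
Proof.
move=> hf; have := hf (-1) a 0; rewrite addr0 (lin0 hf) addr0 !scaleN1r //.
Qed.
Lemma linB f a b : lin f -> f (a - b) = f a - f b.
Proof. by move=> hf; rewrite linD // linN. Qed.

Lemma spanL_subsp s : subsp (spanL s).
Proof.
elim: s => [|x s [IH0 IH]] /=.
  by split=> // k a b -> ->; rewrite scaler0 addr0.
split; first by exists 0, 0; rewrite scale0r addr0.
move=> k a b [c [r [hr ->]]] [d [r' [hr' ->]]].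
exists (k * c + d), (k *: r + r'); split; first exact: IH.
by rewrite scalerDr scalerA scalerDl addrACA.
Qed.

Lemma spanL_sub S s a : subsp S -> (forall x, List.In x s -> S x) -> spanL s a -> S a.
Proof.
move=> hS; elim: s a => [|x s IH] a /= hs.
  by move=> ->; exact: hS.1.
move=> [c [r [hr ->]]]; apply: hS.2; first by apply: hs; left.
by apply: IH => // y hy; apply: hs; right.
Qed.

Lemma spanL_cat s t a b : spanL s a -> spanL t b -> spanL (s ++ t) (a + b).
Proof.
elim: s a => [|x s IH] a /=; first by move=> ->; rewrite add0r.
move=> [c [r [hr ->]]] hb; exists c, (r + b); split; first exact: IH.
by rewrite addrA.
Qed.

Lemma in_spanP s a : in_span s a <-> spanL s a.
Proof.
rewrite /in_span; elim: s a => [|x s IH] a /=.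
  split; first by case=> c ->; rewrite big_ord0.
  by move=> ->; exists (fun _ => 0); rewrite big_ord0.
have e : forall i : 'I_(size s), (x :: s)`_(lift ord0 i) = s`_i by move=> i; rewrite lift0.
split.
  case=> c ->; rewrite big_ord_recl /=.
  exists (c ord0), (\sum_(i < size s) c (lift ord0 i) *: s`_i); split.
    by apply/IH; exists (fun i => c (lift ord0 i)).
  by congr (_ + _); apply: eq_bigr => i _; rewrite ?e.
case=> [c [r [/IH [c' ->] ->]]].
exists (fun i : 'I_(size s).+1 => if unlift ord0 i is Some j then c' j else c).
rewrite big_ord_recl unlift_none /=; congr (_ + _).
by apply: eq_bigr => i _; rewrite liftK ?e.
Qed.

Lemma fd_ext (S T : A -> Prop) : (forall a, S a <-> T a) -> fd S -> fd T.
Proof.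
move=> h [s [h1 h2]]; exists s; split=> [x /h1 /h | a /h /h2] //.
Qed.

Lemma fd_finite S : subsp S -> fd S -> finite_dim S.
Proof.
move=> hS [s [h1 h2]]; exists s; split=> // a; split=> [/h2 /in_spanP|/in_spanP] //.
exact: spanL_sub.
Qed.

Lemma finite_fd S : finite_dim S -> fd S.
Proof. by move=> [s [h1 h2]]; exists s; split=> // a /h2 /in_spanP. Qed.

Lemma sub_fd w : forall S, subsp S -> (forall a, S a -> spanL w a) -> fd S.
Proof.
elim: w => [|x w IH] S hS hSw.
  by exists [::]; split=> // a Sa; exact: hSw a Sa.
pose S' := fun a => S a /\ spanL w a.
have hS' : subsp S'.
  split; first by split; [exact: hS.1 | exact: (spanL_subsp w).1].
  by move=> k a b [h1 h2] [h3 h4]; split; [apply: hS.2 | apply: (spanL_subsp w).2].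
have [s' [hs1 hs2]] := IH S' hS' (fun a h => h.2).
case: (classic (exists b, S b /\ ~ spanL w b)) => [[b [Sb nb]] | hn].
  have [c [r [hr eb]]] := hSw b Sb.
  have c0 : c != 0.
    by apply/eqP => c0; apply: nb; rewrite eb c0 scale0r add0r.
  exists (b :: s'); split.
    by move=> y /= [<-|h] //; exact: (hs1 y h).1.
  move=> a Sa; have [d [r' [hr' ea]]] := hSw a Sa.
  exists (d / c), (a - (d / c) *: b); split; last by rewrite addrC subrK.
  apply: hs2; split; first by apply: subspB => //; apply: subspZ.
  have -> : a - (d / c) *: b = (- (d / c)) *: r + r'.
    rewrite ea eb scalerDr scalerA divfK // opprD addrACA subrr add0r.
    by rewrite scaleNr addrC.
  exact: (spanL_subsp w).2.
exists s'; split; first by move=> y /hs1 [].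
move=> a Sa; apply: hs2; split=> //.
case: (classic (spanL w a)) => // na; exfalso; apply: hn; by exists a.
Qed.

Lemma fd_step (f : A -> A) (V Z : A -> Prop) w :
  lin f -> subsp V -> subsp Z -> (forall z, Z z -> spanL w z) ->
  (forall a, V a -> spanL w (f a)) -> fd (fun a => V a /\ Z (f a)) -> fd V.
Proof.
move=> hf hV hZ hZw hVw [u [hu1 hu2]].
pose I := fun y => exists a z, V a /\ Z z /\ y = f a + z.
have hI : subsp I.
  split; first by exists 0, 0; rewrite (lin0 hf) addr0; split; [exact: hV.1|split; [exact: hZ.1|]].
  move=> k y1 y2 [a1 [z1 [h1 [h2 ->]]]] [a2 [z2 [h3 [h4 ->]]]].
  exists (k *: a1 + a2), (k *: z1 + z2); split; first exact: hV.2.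
  split; first exact: hZ.2.
  by rewrite hf scalerDr addrACA.
have hIw : forall y, I y -> spanL w y.
  move=> y [a [z [h1 [h2 ->]]]]; apply: subspD; [exact: spanL_subsp|exact: hVw|exact: hZw].
have [t [ht1 ht2]] := sub_fd hI hIw.
have key : forall t, (forall y, List.In y t -> I y) -> exists vs,
    (forall v, List.In v vs -> V v) /\
    forall y, spanL t y -> exists v, spanL vs v /\ Z (y - f v).
  elim=> [|y0 t' IH] ht.
    exists [::]; split=> // y /= ->; exists 0; split=> //.
    by rewrite (lin0 hf) subr0; exact: hZ.1.
  have [vs [hvs1 hvs2]] := IH (fun y h => ht y (or_intror h)).
  have [a0 [z0 [Va0 [Zz0 e0]]]] := ht y0 (or_introl erefl).
  exists (a0 :: vs); split.
    by move=> v /= [<-|h]; [|exact: hvs1].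
  move=> y /= [c [r [hr ->]]]; have [v [hv hZv]] := hvs2 r hr.
  exists (c *: a0 + v); split; first by exists c, v.
  have -> : c *: y0 + r - f (c *: a0 + v) = c *: z0 + (r - f v).
    by rewrite e0 hf scalerDr opprD addrACA [c *: f a0 + _]addrC addrK.
  exact: hZ.2.
have [vs [hvs1 hvs2]] := key t ht1.
exists (vs ++ u); split.
  move=> x /List.in_app_iff [/hvs1 // | /hu1 []] //.
move=> a Va.
have : I (f a) by exists a, 0; rewrite addr0; split=> //; split=> //; exact: hZ.1.
move=> /ht2 /hvs2 [v [hv hZv]].
have Vv : V v := spanL_sub hV hvs1 hv.
have Ua : V (a - v) /\ Z (f (a - v)) by rewrite linB //; split=> //; apply: subspB.
have := spanL_cat hv (hu2 _ Ua).
by rewrite addrC subrK.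
Qed.

Lemma fd_multi (Z : A -> Prop) w : subsp Z -> (forall z, Z z -> spanL w z) ->
  forall fs, (forall f, List.In f fs -> lin f) -> forall V, subsp V ->
  (forall f, List.In f fs -> forall a, V a -> spanL w (f a)) ->
  fd (fun a => V a /\ forall f, List.In f fs -> Z (f a)) -> fd V.
Proof.
move=> hZ hZw; elim=> [|f fs IH] hl V hV hVf hU.
  by apply: fd_ext hU => a; split=> [[]|] //.
have hf := hl f (or_introl erefl).
apply: (fd_step hf hV hZ hZw (hVf f (or_introl erefl))).
apply: IH.
- by move=> g hg; apply: hl; right.
- split; first by split; [exact: hV.1 | rewrite (lin0 hf); exact: hZ.1].
  move=> k a b [h1 h2] [h3 h4]; split; first exact: hV.2.
  by rewrite hf; exact: hZ.2.
- by move=> g hg a [Va _]; apply: hVf => //; right.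
- apply: fd_ext hU => a; split.
    by move=> [Va h]; split; [split=> //; apply: h; left | move=> g hg; apply: h; right].
  by move=> [[Va h1] h2]; split=> // g /= [<-|hg]; [|apply: h2].
Qed.

End LinAlg.

Section Grp.
Variables (F : fieldType) (A : lmodType F) (G : group) (act : A -> G -> A).
Hypothesis hact : is_linear_right_action act.

Definition delta (g : G) (a : A) := act a g - a.

Fixpoint Q (n : nat) (a : A) : Prop :=
  match n with
  | 0 => a = 0
  | n'.+1 => forall g, Q n' (delta g a)
  end.

Lemma act_lin g : lin (fun a => act a g).
Proof. by move=> k a b; rewrite hact.2.2. Qed.

Lemma delta_lin g : lin (delta g).
Proof.
move=> k a b; rewrite /delta (act_lin g) scalerBr.
by rewrite opprD addrACA.
Qed.

Lemma Q_subsp n : subsp (Q n).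
Proof.
elim: n => [|n IH] /=.
  by split=> // k a b -> ->; rewrite scaler0 addr0.
split; first by move=> g; rewrite (lin0 (delta_lin g)); exact: IH.1.
by move=> k a b ha hb g; rewrite delta_lin; apply: IH.2.
Qed.

Lemma Q_mono n a : Q n a -> Q n.+1 a.
Proof.
elim: n a => [|n IH] a /=.
  by move=> -> g; rewrite (lin0 (delta_lin g)).
by move=> h g; apply: IH.
Qed.

Lemma Diter_cons n a g gs :
  Diter act n.+1 a (g :: gs) = Diter act n (delta g a) gs.
Proof.
elim: n gs => [|n IH] gs //.
have -> : Diter act n.+2 a (g :: gs) =
  act (Diter act n.+1 a (g :: take n gs)) (nth (gone G) gs n)
  - Diter act n.+1 a (g :: take n gs) by [].
by rewrite IH.
Qed.

Lemma Diter_Q n a : (forall gs, size gs = n -> Diter act n a gs = 0) <-> Q n a.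
Proof.
elim: n a => [|n IH] a.
  split; first by move=> h; exact: (h [::] erefl).
  by move=> /= -> gs.
split.
  move=> h g; apply/IH => gs hs; rewrite -Diter_cons; apply: h; by rewrite /= hs.
move=> h [|g gs] //= hs.
have -> : act (Diter act n a (take n (g :: gs))) (nth (gone G) (g :: gs) n)
   - Diter act n a (take n (g :: gs)) = Diter act n.+1 a (g :: gs) by [].
rewrite Diter_cons; apply: (IH _).2; [exact: h | by case: hs].
Qed.

Lemma Ppoly_Q n a : Ppoly act n a <-> Q n.+1 a.
Proof. exact: Diter_Q. Qed.

Lemma delta_mul g h a :
  delta (gmul g h) a = delta h (delta g a) + delta g a + delta h a.
Proof.
rewrite /delta -hact.2.1 (linB _ _ (act_lin h)).
by rewrite subrK addrA subrK.
Qed.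

Lemma Q_gen n a s :
  Q n.+2 a -> (forall x, List.In x s -> Q n (delta x a)) ->
  forall g, gen (fun x => List.In x s \/ commutator_subgroup x) g -> Q n (delta g a).
Proof.
move=> h2 hs.
have hQ := Q_subsp n.
pose E u v := Q n (u - v).
have Etr : forall u v w, E u v -> E v w -> E u w.
  move=> u v w h1 h3; have := subspD hQ h1 h3; by rewrite /E addrA subrK.
have Eadd : forall u v u' v', E u v -> E u' v' -> E (u + u') (v + v').
  move=> u v u' v' h1 h3; have := subspD hQ h1 h3; by rewrite /E opprD addrACA.
have hM : forall g h, E (delta (gmul g h) a) (delta g a + delta h a).
  move=> g h; rewrite /E delta_mul -(addrA _ (delta g a)) addrK; exact: h2.
have h1 : delta (gone G) a = 0 by rewrite /delta hact.1 subrr.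
have hI : forall g, E (delta g a + delta (ginv g) a) 0.
  move=> g; have := hM g (ginv g); rewrite gmulgV h1 /E sub0r subr0.
  by move=> /(subspN hQ); rewrite opprK.
have Pone : Q n (delta (gone G) a) by rewrite h1; exact: hQ.1.
have Pmul : forall g h, Q n (delta g a) -> Q n (delta h a) -> Q n (delta (gmul g h) a).
  move=> g h hg hh; have := subspD hQ (hM g h) (subspD hQ hg hh).
  by rewrite subrK.
have Pinv : forall g, Q n (delta g a) -> Q n (delta (ginv g) a).
  move=> g hg; have := subspD hQ (subspN hQ hg) (hI g); by rewrite subr0 addKr.
have Pcomm : forall x y : G, Q n (delta (Defs.commg x y) a).
  move=> x y; rewrite /Defs.commg.
  have e1 := hM (gmul (ginv x) (ginv y)) (gmul x y).
  have e2 := Eadd _ _ _ _ (hM (ginv x) (ginv y)) (hM x y).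
  have e3 : E (delta (ginv x) a + delta (ginv y) a + (delta x a + delta y a))
              ((delta x a + delta (ginv x) a) + (delta y a + delta (ginv y) a)).
    rewrite /E addrACA [delta (ginv x) a + _]addrC [delta (ginv y) a + _]addrC subrr.
    exact: hQ.1.
  have e4 := Eadd _ _ _ _ (hI x) (hI y).
  have := Etr _ _ _ (Etr _ _ _ (Etr _ _ _ e1 e2) e3) e4.
  by rewrite /E addr0 subr0.
have Pgen : forall S : G -> Prop, (forall x, S x -> Q n (delta x a)) ->
    forall g, gen S g -> Q n (delta g a).
  move=> S hS g; elim=> //; auto.
apply: (Pgen) => x [hx|hx]; first exact: hs.
apply: (Pgen _ _ x hx) => z [x' [y' ->]]; exact: Pcomm.
Qed.

End Grp.

Theorem mainTheorem1 (F : fieldType) (A : lmodType F) (G : group)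
  (act : A -> G -> A) :
  [pchar F] =i pred0 ->
  abelianization_fg G ->
  is_linear_right_action act ->
  finite_dim (fixed_space act) ->
  forall n : nat, finite_dim (Ppoly act n).
Proof.
move=> _ [s hs] hact hfix n.
have key : forall n, fd (Q act n) /\ fd (Q act n.+1).
  elim=> [|m [hm hm1]].
    split; first by exists [::]; split=> // a.
    apply: fd_ext (finite_fd hfix) => a; split.
      by move=> h g /=; rewrite /delta h subrr.
    by move=> h g; apply/eqP; rewrite -subr_eq0; apply/eqP; exact: h g.
  split=> //.
  have [w [hw1 hw2]] := hm1.
  apply: (fd_multi (Q_subsp hact m) (w := w)) (map (@delta F A G act) s) _ _ (Q_subsp hact m.+2) _ _.
  - by move=> a /(Q_mono hact) /hw2.
  - by move=> f /List.in_map_iff [x [<- _]]; exact: delta_lin.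
  - by move=> f /List.in_map_iff [x [<- _]] a Va; apply: hw2; exact: Va x.
  - apply: fd_ext hm1 => a; split.
      move=> ha; split; first exact: Q_mono.
      by move=> f /List.in_map_iff [x [<- _]]; exact: ha x.
    move=> [ha hf] g; apply: (Q_gen hact ha _ (hs g)) => x hx.
    by apply: hf; apply: List.in_map.
apply: fd_finite.
  split; first by apply/Ppoly_Q => //; exact: (Q_subsp hact _).1.
  move=> k a b /(Ppoly_Q act _ _) ha /(Ppoly_Q act _ _) hb; apply/(Ppoly_Q act _ _).
  exact: (Q_subsp hact _).2.
apply: fd_ext (key n).2 => a; split; by move/(Ppoly_Q act _ _).
Qed.
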